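(* Let $\Gamma$ be a finite multiset of formulas and $B$ a formula such that $\Gamma\longrightarrow B$ has a $\mathbf{C}$-proof in which no $\supset$-L, no $\lor$-R and no $\exists$-R rule is used. Then $\Gamma\longrightarrow B$ has an $\mathbf{I}$-proof.
   Context: Formulas are first-order formulas built from atomic formulas and the logical constants $\top$, $\bot$ (not counted as atomic) using $\land,\lor,\supset,\forall,\exists$; $\neg A$ abbreviates $A\supset\bot$; $B[t/x]$ is capture-avoiding substitution of term $t$ for free $x$ in $B$. A sequent $\Gamma\longrightarrow\Delta$ is a pair of finite multisets of formulas; $B,\Gamma$ denotes $\Gamma$ with an extra occurrence of $B$. A sequent is an axiom if $\top\in\Delta$ or some formula that is $\bot$ or atomic occurs in both $\Gamma$ and $\Delta$. Writing premises $\Rightarrow$ conclusion, the rules are all instances of: contr-L: $B,B,\Gamma\longrightarrow\Delta\Rightarrow B,\Gamma\longrightarrow\Delta$; contr-R: $\Gamma\longrightarrow\Delta,B,B\Rightarrow\Gamma\longrightarrow\Delta,B$; $\bot$-R: $\Gamma\longrightarrow\Delta,\bot\Rightarrow\Gamma\longrightarrow\Delta,D$; $\land$-L: $B,\Gamma\longrightarrow\Delta\Rightarrow B\land D,\Gamma\longrightarrow\Delta$ and $D,\Gamma\longrightarrow\Delta\Rightarrow B\land D,\Gamma\longrightarrow\Delta$; $\lor$-L: $B,\Gamma\longrightarrow\Delta$ and $D,\Gamma\longrightarrow\Delta\Rightarrow B\lor D,\Gamma\longrightarrow\Delta$; $\land$-R: $\Gamma\longrightarrow\Delta,B$ and $\Gamma\longrightarrow\Delta,D\Rightarrow\Gamma\longrightarrow\Delta,B\land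 D$; $\lor$-R: $\Gamma\longrightarrow\Delta,B\Rightarrow\Gamma\longrightarrow\Delta,B\lor D$ and $\Gamma\longrightarrow\Delta,D\Rightarrow\Gamma\longrightarrow\Delta,B\lor D$; $\supset$-L: $\Gamma\longrightarrow\Delta,B$ and $D,\Gamma\longrightarrow\Theta\Rightarrow B\supset D,\Gamma\longrightarrow\Delta,\Theta$; $\supset$-R: $B,\Gamma\longrightarrow\Delta,D\Rightarrow\Gamma\longrightarrow\Delta,B\supset D$; $\forall$-L: $B[t/x],\Gamma\longrightarrow\Delta\Rightarrow\forall x B,\Gamma\longrightarrow\Delta$; $\exists$-R: $\Gamma\longrightarrow\Delta,B[t/x]\Rightarrow\Gamma\longrightarrow\Delta,\exists x B$ ($t$ any term); $\exists$-L: $B[c/x],\Gamma\longrightarrow\Delta\Rightarrow\exists x B,\Gamma\longrightarrow\Delta$; $\forall$-R: $\Gamma\longrightarrow\Delta,B[c/x]\Rightarrow\Gamma\longrightarrow\Delta,\forall x B$, where the constant $c$ does not occur in the conclusion. A $\mathbf{C}$-proof (classical) is a finite tree of sequents with axioms at the leaves, each internal node being the conclusion of a rule instance whose premises are its children. An $\mathbf{I}$-proof (intuitionistic) is a $\mathbf{C}$-proof in which every sequent has exactly one formula in its succedent. A rule ''is used'' if some instance of that schema occurs in the proof. *)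

(* Defs.v *)
From Stdlib Require Import List Arith Bool Permutation.
Import ListNotations.
Set Implicit Arguments.

Section Syntax.
Variables (F P : Type).

(* Terms: bound/free variables as de Bruijn indices, eigen-constants
   (parameters) Par c, and applications of function symbols. *)
Inductive term : Type :=
| Var : nat -> term
| Par : nat -> term
| Fn  : F -> list term -> term.

Inductive formula : Type :=
| Atom : P -> list term -> formula
| FTop : formula
| FBot : formula
| FAnd : formula -> formula -> formula
| FOr  : formula -> formula -> formula
| FImp : formula -> formula -> formula
| FAll : formula -> formula     (* binds de Bruijn index 0 *)
| FEx  : formula -> formula.

Definition FNeg (A : formula) : formula := FImp A FBot.

Fixpoint lift_term (k : nat) (t : term) : term :=
  match t with
  | Var n => if k <=? n then Var (S n) else Var n
  | Par c => Par c
  | Fn f ts => Fn f (map (lift_term k) ts)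
  end.

Fixpoint subst_term (k : nat) (s : term) (t : term) : term :=
  match t with
  | Var n => if n =? k then s else if k <? n then Var (pred n) else Var n
  | Par c => Par c
  | Fn f ts => Fn f (map (subst_term k s) ts)
  end.

Fixpoint subst_form (k : nat) (s : term) (A : formula) : formula :=
  match A with
  | Atom p ts => Atom p (map (subst_term k s) ts)
  | FTop => FTop
  | FBot => FBot
  | FAnd A1 A2 => FAnd (subst_form k s A1) (subst_form k s A2)
  | FOr A1 A2 => FOr (subst_form k s A1) (subst_form k s A2)
  | FImp A1 A2 => FImp (subst_form k s A1) (subst_form k s A2)
  | FAll A1 => FAll (subst_form (S k) (lift_term 0 s) A1)
  | FEx A1 => FEx (subst_form (S k) (lift_term 0 s) A1)
  end.

(* B[t/x] where B is the body of a quantifier Qx B (x = index 0):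
   capture-avoiding by construction (de Bruijn). *)
Definition inst (B : formula) (t : term) : formula := subst_form 0 t B.

Fixpoint par_in_term (c : nat) (t : term) : bool :=
  match t with
  | Var _ => false
  | Par d => Nat.eqb c d
  | Fn _ ts => existsb (par_in_term c) ts
  end.

Fixpoint par_in_form (c : nat) (A : formula) : bool :=
  match A with
  | Atom _ ts => existsb (par_in_term c) ts
  | FTop | FBot => false
  | FAnd A1 A2 | FOr A1 A2 | FImp A1 A2 => par_in_form c A1 || par_in_form c A2
  | FAll A1 | FEx A1 => par_in_form c A1
  end.

Definition par_in_list (c : nat) (G : list formula) : bool :=
  existsb (par_in_form c) G.

Definition is_atomic (A : formula) : Prop :=
  match A with Atom _ _ => True | _ => False end.

Definition is_axiom (G D : list formula) : Prop :=
  In FTop D \/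
  exists A, (A = FBot \/ is_atomic A) /\ In A G /\ In A D.

Inductive rule : Type :=
| RContrL | RContrR | RBotR | RAndL | ROrL | RAndR | ROrR
| RImpL | RImpR | RAllL | RExR | RExL | RAllR.

(* Sequents are pairs of finite multisets, represented by lists taken up
   to permutation (constructor d_perm).  [deriv allowed single G D]:
   G --> D has a proof using only rule schemas r with [allowed r], and,
   if [single] is true, every sequent in the proof has exactly one
   formula in its succedent. *)
Inductive deriv (allowed : rule -> Prop) (single : bool)
  : list formula -> list formula -> Prop :=
| d_perm : forall G G' D D',
    Permutation G G' -> Permutation D D' ->
    deriv allowed single G D -> deriv allowed single G' D'
| d_ax : forall G D,
    (single = true -> length D = 1) ->
    is_axiom G D -> deriv allowed single G D
| d_contrL : forall A G D,
    allowed RContrL -> (single = true -> length D = 1) ->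
    deriv allowed single (A :: A :: G) D ->
    deriv allowed single (A :: G) D
| d_contrR : forall A G D,
    allowed RContrR -> (single = true -> length (D ++ [A]) = 1) ->
    deriv allowed single G (D ++ [A; A]) ->
    deriv allowed single G (D ++ [A])
| d_botR : forall A G D,
    allowed RBotR -> (single = true -> length (D ++ [A]) = 1) ->
    deriv allowed single G (D ++ [FBot]) ->
    deriv allowed single G (D ++ [A])
| d_andL1 : forall A1 A2 G D,
    allowed RAndL -> (single = true -> length D = 1) ->
    deriv allowed single (A1 :: G) D ->
    deriv allowed single (FAnd A1 A2 :: G) D
| d_andL2 : forall A1 A2 G D,
    allowed RAndL -> (single = true -> length D = 1) ->
    deriv allowed single (A2 :: G) D ->
    deriv allowed single (FAnd A1 A2 :: G) D
| d_orL : forall A1 A2 G D,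
    allowed ROrL -> (single = true -> length D = 1) ->
    deriv allowed single (A1 :: G) D ->
    deriv allowed single (A2 :: G) D ->
    deriv allowed single (FOr A1 A2 :: G) D
| d_andR : forall A1 A2 G D,
    allowed RAndR -> (single = true -> length (D ++ [FAnd A1 A2]) = 1) ->
    deriv allowed single G (D ++ [A1]) ->
    deriv allowed single G (D ++ [A2]) ->
    deriv allowed single G (D ++ [FAnd A1 A2])
| d_orR1 : forall A1 A2 G D,
    allowed ROrR -> (single = true -> length (D ++ [FOr A1 A2]) = 1) ->
    deriv allowed single G (D ++ [A1]) ->
    deriv allowed single G (D ++ [FOr A1 A2])
| d_orR2 : forall A1 A2 G D,
    allowed ROrR -> (single = true -> length (D ++ [FOr A1 A2]) = 1) ->
    deriv allowed single G (D ++ [A2]) ->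
    deriv allowed single G (D ++ [FOr A1 A2])
| d_impL : forall A1 A2 G D T,
    allowed RImpL -> (single = true -> length (D ++ T) = 1) ->
    deriv allowed single G (D ++ [A1]) ->
    deriv allowed single (A2 :: G) T ->
    deriv allowed single (FImp A1 A2 :: G) (D ++ T)
| d_impR : forall A1 A2 G D,
    allowed RImpR -> (single = true -> length (D ++ [FImp A1 A2]) = 1) ->
    deriv allowed single (A1 :: G) (D ++ [A2]) ->
    deriv allowed single G (D ++ [FImp A1 A2])
| d_allL : forall A t G D,
    allowed RAllL -> (single = true -> length D = 1) ->
    deriv allowed single (inst A t :: G) D ->
    deriv allowed single (FAll A :: G) D
| d_exR : forall A t G D,
    allowed RExR -> (single = true -> length (D ++ [FEx A]) = 1) ->
    deriv allowed single G (D ++ [inst A t]) ->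
    deriv allowed single G (D ++ [FEx A])
| d_exL : forall A c G D,
    allowed RExL -> (single = true -> length D = 1) ->
    par_in_list c (FEx A :: G) = false -> par_in_list c D = false ->
    deriv allowed single (inst A (Par c) :: G) D ->
    deriv allowed single (FEx A :: G) D
| d_allR : forall A c G D,
    allowed RAllR -> (single = true -> length (D ++ [FAll A]) = 1) ->
    par_in_list c G = false -> par_in_list c (D ++ [FAll A]) = false ->
    deriv allowed single G (D ++ [inst A (Par c)]) ->
    deriv allowed single G (D ++ [FAll A]).

Definition C_provable (G D : list formula) : Prop :=
  deriv (fun _ => True) false G D.

Definition I_provable (G D : list formula) : Prop :=
  deriv (fun _ => True) true G D.

End Syntax.

(* Main.v *)
Require Import Defs.
From Stdlib Require Import List Arith Bool Permutation Lia.
Import ListNotations.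
Set Implicit Arguments.
Arguments FTop {F P}. Arguments FBot {F P}. Arguments Par {F}. Arguments Var {F}.

Section S.
Variables F P : Type.
Notation fm := (formula F P).
Notation tm := (term F).

Fixpoint term_ind' (Q : tm -> Prop) (hv : forall n, Q (Var n)) (hp : forall c, Q (Par c))
  (hf : forall f ts, Forall Q ts -> Q (Fn f ts)) (t : tm) {struct t} : Q t :=
  match t with
  | Var n => hv n
  | Par c => hp c
  | Fn f ts => hf f ts ((fix go (l : list tm) : Forall Q l :=
       match l with [] => @Forall_nil _ Q | t :: l => @Forall_cons _ Q t l (@term_ind' Q hv hp hf t) (go l) end) ts)
  end.

Fixpoint ren_term (c d : nat) (t : tm) : tm :=
  match t with
  | Var n => Var n
  | Par e => if Nat.eqb e c then Par d else Par e
  | Fn f ts => Fn f (map (ren_term c d) ts)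
  end.

Fixpoint ren_form (c d : nat) (A : fm) : fm :=
  match A with
  | Atom p ts => Atom p (map (ren_term c d) ts)
  | FTop => FTop
  | FBot => FBot
  | FAnd A1 A2 => FAnd (ren_form c d A1) (ren_form c d A2)
  | FOr A1 A2 => FOr (ren_form c d A1) (ren_form c d A2)
  | FImp A1 A2 => FImp (ren_form c d A1) (ren_form c d A2)
  | FAll A1 => FAll (ren_form c d A1)
  | FEx A1 => FEx (ren_form c d A1)
  end.

Fixpoint maxp_term (t : tm) : nat :=
  match t with
  | Var _ => 0
  | Par d => d
  | Fn _ ts => fold_right (fun t m => Nat.max (maxp_term t) m) 0 ts
  end.

Fixpoint maxp_form (A : fm) : nat :=
  match A with
  | Atom _ ts => fold_right (fun t m => Nat.max (maxp_term t) m) 0 ts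
  | FTop | FBot => 0
  | FAnd A1 A2 | FOr A1 A2 | FImp A1 A2 => Nat.max (maxp_form A1) (maxp_form A2)
  | FAll A1 | FEx A1 => maxp_form A1
  end.

Definition maxp_list (l : list fm) : nat := fold_right (fun A m => Nat.max (maxp_form A) m) 0 l.

Lemma ren_lift c d k t : ren_term c d (lift_term k t) = lift_term k (ren_term c d t).
Proof.
  induction t using term_ind'; simpl; auto.
  - destruct (k <=? n); reflexivity.
  - destruct (c0 =? c); reflexivity.
  - f_equal. rewrite !map_map. apply map_ext_in. intros a Ha.
    rewrite Forall_forall in H. auto.
Qed.

Lemma ren_subst_term c d k s t :
  ren_term c d (subst_term k s t) = subst_term k (ren_term c d s) (ren_term c d t).
Proof.
  induction t using term_ind'; simpl; auto.
  - destruct (n =? k); auto. destruct (k <? n); reflexivity.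
  - destruct (c0 =? c); reflexivity.
  - f_equal. rewrite !map_map. apply map_ext_in. intros a Ha.
    rewrite Forall_forall in H. auto.
Qed.

Lemma ren_subst_form c d A : forall k s,
  ren_form c d (subst_form k s A) = subst_form k (ren_term c d s) (ren_form c d A).
Proof.
  induction A; intros; simpl; try (f_equal; auto; fail).
  - f_equal. rewrite !map_map. apply map_ext. intros. apply ren_subst_term.
  - f_equal. rewrite IHA. f_equal. apply ren_lift.
  - f_equal. rewrite IHA. f_equal. apply ren_lift.
Qed.

Lemma ren_inst c d A t : ren_form c d (inst A t) = inst (ren_form c d A) (ren_term c d t).
Proof. apply ren_subst_form. Qed.

Lemma existsb_false_map (f : tm -> bool) g ts :
  (forall t, In t ts -> f t = false -> f (g t) = false) ->
  existsb f ts = false -> existsb f (map g ts) = false.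
Proof.
  induction ts; simpl; auto. intros H H1.
  apply orb_false_elim in H1 as [H1 H2]. rewrite H; auto.
Qed.

Lemma par_ren_term_fresh e c d t : e <> d -> par_in_term e t = false ->
  par_in_term e (ren_term c d t) = false.
Proof.
  intro Hed. induction t using term_ind'; simpl; auto.
  - intros H0. destruct (c0 =? c); simpl; auto. apply Nat.eqb_neq; auto.
  - apply existsb_false_map. rewrite Forall_forall in H. auto.
Qed.

Lemma par_ren_form_fresh e c d A : e <> d -> par_in_form e A = false ->
  par_in_form e (ren_form c d A) = false.
Proof.
  intro Hed. induction A; simpl; auto; intros H;
   try (apply orb_false_elim in H as [H1 H2]; rewrite IHA1, IHA2; auto).
  apply existsb_false_map; auto. intros. apply par_ren_term_fresh; auto.
Qed.

Lemma ren_term_id c d t : par_in_term c t = false -> ren_term c d t = t.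
Proof.
  induction t using term_ind'; simpl; auto.
  - intros H. rewrite Nat.eqb_sym, H. auto.
  - intros H1. f_equal. rewrite Forall_forall in H.
    induction ts; simpl in *; auto. apply orb_false_elim in H1 as [H1 H2].
    f_equal; auto.
Qed.

Lemma ren_form_id c d A : par_in_form c A = false -> ren_form c d A = A.
Proof.
  induction A; simpl; intros H; auto;
   try (apply orb_false_elim in H as [H1 H2]; rewrite IHA1, IHA2; auto; fail);
   try (rewrite IHA; auto; fail).
  f_equal. induction l; simpl in *; auto. apply orb_false_elim in H as [H1 H2].
  rewrite ren_term_id; auto. f_equal; auto.
Qed.

Lemma par_lift e k (t : tm) : par_in_term e (lift_term k t) = par_in_term e t.
Proof.
  induction t using term_ind'; simpl; auto.
  - destruct (k <=? n); auto.
  - rewrite Forall_forall in H. induction ts; simpl in *; auto.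
    rewrite H, IHts; auto.
Qed.

Lemma par_subst_term e k (s t : tm) : par_in_term e s = false -> par_in_term e t = false ->
  par_in_term e (subst_term k s t) = false.
Proof.
  intros Hs. induction t using term_ind'; simpl; auto.
  - destruct (n =? k); auto. destruct (k <? n); auto.
  - apply existsb_false_map. rewrite Forall_forall in H. auto.
Qed.

Lemma par_subst_form e (A : fm) : forall k s, par_in_term e s = false -> par_in_form e A = false ->
  par_in_form e (subst_form k s A) = false.
Proof.
  induction A; simpl; intros k s Hs H; auto;
   try (apply orb_false_elim in H as [H1 H2]; rewrite IHA1, IHA2; auto; fail).
  - apply existsb_false_map; auto. intros. apply par_subst_term; auto.
  - apply IHA; auto. rewrite par_lift; auto.
  - apply IHA; auto. rewrite par_lift; auto.
Qed.

Lemma par_inst e (A : fm) c : e <> c -> par_in_form e A = false -> par_in_form e (inst A (Par c)) = false.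
Proof. intros. apply par_subst_form; auto. simpl. apply Nat.eqb_neq; auto. Qed.

Lemma fold_max_lt (g : tm -> nat) ts e : fold_right (fun t m => Nat.max (g t) m) 0 ts < e ->
  forall t, In t ts -> g t < e.
Proof.
  induction ts; simpl; intros H t Ht; [contradiction|]. destruct Ht; subst; lia || (apply IHts; auto; lia).
Qed.

Lemma maxp_term_fresh e (t : tm) : maxp_term t < e -> par_in_term e t = false.
Proof.
  induction t using term_ind'; simpl; auto.
  - intros. apply Nat.eqb_neq. lia.
  - intros H1. rewrite Forall_forall in H. pose proof (fold_max_lt _ _ H1) as H2.
    clear H1. induction ts; simpl in *; auto. rewrite H, IHts; auto.
Qed.

Lemma maxp_form_fresh e (A : fm) : maxp_form A < e -> par_in_form e A = false.
Proof.
  induction A; simpl; intros H; auto;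
   try (rewrite IHA1, IHA2; auto; lia).
  pose proof (fold_max_lt _ _ H) as H2. clear H. induction l; simpl in *; auto.
  rewrite maxp_term_fresh, IHl; auto.
Qed.

Definition fresh_in (c : nat) (l : list fm) := forall A, In A l -> par_in_form c A = false.

Lemma pl_iff c l : par_in_list c l = false <-> fresh_in c l.
Proof.
  unfold par_in_list, fresh_in. induction l; simpl; split; auto.
  - contradiction.
  - intros H A0 [<-|HA]; apply orb_false_elim in H as [H1 H2]; auto. apply IHl; auto.
  - intros H. rewrite H; auto. apply IHl; auto.
Qed.

Lemma maxp_list_fresh e l : maxp_list l < e -> fresh_in e l.
Proof.
  induction l; simpl; intros H A HA; [contradiction|].
  destruct HA; subst. apply maxp_form_fresh; lia. apply IHl; auto; lia.
Qed.

Lemma fresh_exists (l : list fm) (c d : nat) : exists e, fresh_in e l /\ e <> c /\ e <> d.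
Proof.
  exists (S (maxp_list l + c + d)). split; [|lia]. apply maxp_list_fresh. lia.
Qed.

Lemma fresh_perm c l l' : Permutation l l' -> fresh_in c l -> fresh_in c l'.
Proof. unfold fresh_in. intros Hp H A HA. apply H. eapply Permutation_in; [apply Permutation_sym; exact Hp|exact HA]. Qed.

Lemma fresh_app c l l' : fresh_in c (l ++ l') <-> fresh_in c l /\ fresh_in c l'.
Proof. unfold fresh_in. split. intros H; split; intros; apply H; apply in_or_app; auto.
  intros [H1 H2] A HA. apply in_app_or in HA as [HA|HA]; auto. Qed.

Lemma fresh_cons c A l : fresh_in c (A :: l) <-> par_in_form c A = false /\ fresh_in c l.
Proof. unfold fresh_in. simpl. split. intros H; split; auto.
  intros [H1 H2] B [<-|HB]; auto. Qed.

Lemma fresh_ren e c d l : e <> d -> fresh_in e l -> fresh_in e (map (ren_form c d) l).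
Proof. unfold fresh_in. intros H1 H2 A HA. apply in_map_iff in HA as [B [<- HB]].
  apply par_ren_form_fresh; auto. Qed.

Lemma ren_list_id c d l : fresh_in c l -> map (ren_form c d) l = l.
Proof. induction l; simpl; auto. intros H. apply fresh_cons in H as [H1 H2].
  rewrite ren_form_id, IHl; auto. Qed.


Inductive K : nat -> list fm -> list fm -> Prop :=
| k_perm n G G' D D' : Permutation G G' -> Permutation D D' -> K n G D -> K n G' D'
| k_ax n G D : is_axiom G D -> K n G D
| k_contrL n A G D : K n (A::A::G) D -> K (S n) (A::G) D
| k_botR n A G D : K n G (FBot :: D) -> K (S n) G (A :: D)
| k_andL1 n A1 A2 G D : K n (A1::G) D -> K (S n) (FAnd A1 A2 :: G) D
| k_andL2 n A1 A2 G D : K n (A2::G) D -> K (S n) (FAnd A1 A2 :: G) D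
| k_orL n A1 A2 G D : K n (A1::G) D -> K n (A2::G) D -> K (S n) (FOr A1 A2::G) D
| k_andR n A1 A2 G D : K n G (A1 :: D) -> K n G (A2 :: D) -> K (S n) G (FAnd A1 A2 :: D)
| k_impR n A1 A2 G D : K n (A1::G) (A2 :: D) -> K (S n) G (FImp A1 A2 :: D)
| k_allL n A t G D : K n (inst A t :: G) D -> K (S n) (FAll A :: G) D
| k_exL n A c G D : fresh_in c (FEx A :: G) -> fresh_in c D ->
    K n (inst A (Par c) :: G) D -> K (S n) (FEx A :: G) D
| k_allR n A c G D : fresh_in c G -> fresh_in c (FAll A :: D) ->
    K n G (inst A (Par c) :: D) -> K (S n) G (FAll A :: D).

Lemma K_lift n G D : K n G D -> K (S n) G D.
Proof. induction 1; try (econstructor; eauto; fail). Qed.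

Lemma K_mono n m G D : n <= m -> K n G D -> K m G D.
Proof. induction 1; auto. intros. apply K_lift; auto. Qed.

Lemma kpR n G D D' : Permutation D D' -> K n G D -> K n G D'.
Proof. intros. eapply k_perm; eauto. Qed.
Lemma kpL n G G' D : Permutation G G' -> K n G D -> K n G' D.
Proof. intros. eapply k_perm; eauto. Qed.

Lemma ax_ren c d G D : is_axiom G D -> is_axiom (map (ren_form c d) G) (map (ren_form c d) D).
Proof.
  intros [H|[A [H1 [H2 H3]]]].
  - left. change FTop with (ren_form c d FTop). apply in_map; auto.
  - right. exists (ren_form c d A). split; [|split; apply in_map; auto].
    destruct H1 as [->|H1]; [left; auto|right]. destruct A; simpl in *; auto.
Qed.

Lemma ren_eig e e' A (G : list fm) :
  par_in_form e A = false -> fresh_in e G ->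
  map (ren_form e e') (inst A (Par e) :: G) = inst A (Par e') :: G.
Proof.
  intros H1 H2. simpl. rewrite ren_inst, ren_form_id, ren_list_id; auto. simpl.
  rewrite Nat.eqb_refl. auto.
Qed.

Lemma ren_eig2 c d e' A (G : list fm) : e' <> c ->
  map (ren_form c d) (inst A (Par e') :: G) = inst (ren_form c d A) (Par e') :: map (ren_form c d) G.
Proof.
  intros H. simpl. rewrite ren_inst. simpl. replace (e' =? c) with false; auto.
  symmetry; apply Nat.eqb_neq; auto.
Qed.

Lemma ren_K : forall n G D, K n G D -> forall c d, K n (map (ren_form c d) G) (map (ren_form c d) D).
Proof.
  intro n. induction n as [n IHn] using lt_wf_ind. intros G D H. revert IHn.
  induction H; intros IHn c0 d0.
  - eapply k_perm; [apply Permutation_map; eauto|apply Permutation_map; eauto|]. auto.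
  - apply k_ax. apply ax_ren; auto.
  - apply k_contrL. apply (IHn n (Nat.lt_succ_diag_r n) _ _ H).
  - apply k_botR. apply (IHn n (Nat.lt_succ_diag_r n) _ _ H).
  - apply k_andL1. apply (IHn n (Nat.lt_succ_diag_r n) _ _ H).
  - apply k_andL2. apply (IHn n (Nat.lt_succ_diag_r n) _ _ H).
  - apply k_orL. apply (IHn n (Nat.lt_succ_diag_r n) _ _ H). apply (IHn n (Nat.lt_succ_diag_r n) _ _ H0).
  - apply k_andR. apply (IHn n (Nat.lt_succ_diag_r n) _ _ H). apply (IHn n (Nat.lt_succ_diag_r n) _ _ H0).
  - apply k_impR. apply (IHn n (Nat.lt_succ_diag_r n) _ _ H).
  - simpl. apply k_allL with (t := ren_term c0 d0 t). rewrite <- ren_inst.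
    apply (IHn n (Nat.lt_succ_diag_r n) _ _ H).
  - destruct (fresh_exists (FEx A :: G ++ D) c0 d0) as [e [He [Hec Hed]]].
    apply fresh_cons in He as [HeA He]. apply fresh_app in He as [HeG HeD].
    pose proof H as H'. apply fresh_cons in H as [HcA HcG].
    pose proof (IHn n (Nat.lt_succ_diag_r n) _ _ H1 c e) as H2.
    rewrite ren_eig, ren_list_id in H2; auto.
    pose proof (IHn n (Nat.lt_succ_diag_r n) _ _ H2 c0 d0) as H3.
    rewrite ren_eig2 in H3; auto. simpl.
    apply k_exL with (c := e); [ | | exact H3].
    + change (fresh_in e (map (ren_form c0 d0) (FEx A :: G))).
      apply fresh_ren; auto. apply fresh_cons; auto.
    + apply fresh_ren; auto.
  - destruct (fresh_exists (FAll A :: G ++ D) c0 d0) as [e [He [Hec Hed]]].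
    apply fresh_cons in He as [HeA He]. apply fresh_app in He as [HeG HeD].
    pose proof H0 as H0'. apply fresh_cons in H0 as [HcA HcD].
    pose proof (IHn n (Nat.lt_succ_diag_r n) _ _ H1 c e) as H2.
    rewrite ren_eig, ren_list_id in H2; auto.
    pose proof (IHn n (Nat.lt_succ_diag_r n) _ _ H2 c0 d0) as H3.
    rewrite ren_eig2 in H3; auto. simpl.
    apply k_allR with (c := e); [ | | exact H3].
    + apply fresh_ren; auto.
    + change (fresh_in e (map (ren_form c0 d0) (FAll A :: D))).
      apply fresh_ren; auto. apply fresh_cons; auto.
Qed.

Lemma eig_swap n A e e' (G D : list fm) :
  par_in_form e A = false -> fresh_in e G -> fresh_in e D ->
  K n (inst A (Par e) :: G) D -> K n (inst A (Par e') :: G) D.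
Proof.
  intros H1 H2 H3 H. apply ren_K with (c := e) (d := e') in H.
  rewrite ren_eig, ren_list_id in H; auto.
Qed.

Lemma eig_swap_r n A e e' (G D : list fm) :
  par_in_form e A = false -> fresh_in e G -> fresh_in e D ->
  K n G (inst A (Par e) :: D) -> K n G (inst A (Par e') :: D).
Proof.
  intros H1 H2 H3 H. apply ren_K with (c := e) (d := e') in H.
  rewrite ren_eig, ren_list_id in H; auto.
Qed.

Lemma perm_split (X Y : fm) D0 Delta : Permutation (X :: D0) (Y :: Delta) ->
  (X = Y /\ Permutation D0 Delta) \/
  (exists D', Permutation Delta (X :: D') /\ Permutation D0 (Y :: D')).
Proof.
  intros H. assert (Hin : In X (Y :: Delta)) by (eapply Permutation_in; eauto; left; auto).
  destruct Hin as [<-|Hin].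
  - left. split; auto. eapply Permutation_cons_inv; eauto.
  - right. apply in_split in Hin as [l1 [l2 ->]]. exists (l1 ++ l2). split.
    + apply Permutation_sym, Permutation_middle.
    + apply Permutation_cons_inv with (a := X). eapply Permutation_trans; [exact H|].
      eapply Permutation_trans; [apply perm_skip, Permutation_sym, Permutation_middle|].
      apply perm_swap.
Qed.

Lemma perm_split2 (X A : fm) D0 Delta : Permutation (X :: D0) (A :: A :: Delta) ->
  (X = A /\ Permutation D0 (A :: Delta)) \/
  (exists D', Permutation Delta (X :: D') /\ Permutation D0 (A :: A :: D')).
Proof.
  intros H. apply perm_split in H as [H|[D1 [H1 H2]]]; auto.
  apply Permutation_sym in H1. apply perm_split in H1 as [[-> H1]|[D2 [H3 H4]]].
  - left. split; auto. eapply Permutation_trans; [exact H2|]. apply perm_skip; exact H1.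
  - right. exists D2. split. exact H3. eapply Permutation_trans; [exact H2|]. apply perm_skip; exact H4.
Qed.

Lemma P1 (X Y : fm) D0 D' : Permutation D0 (Y :: D') -> Permutation (X :: D0) (Y :: X :: D').
Proof. intros H. eapply Permutation_trans; [apply perm_skip; eauto|]. apply perm_swap. Qed.

Lemma P2 (X Z : fm) D D' : Permutation D (X :: D') -> Permutation (X :: Z :: D') (Z :: D).
Proof. intros H. eapply Permutation_trans; [apply perm_swap|]. apply perm_skip, Permutation_sym; auto. Qed.

Lemma fresh_split c (Y : fm) D D' : fresh_in c D -> Permutation D (Y :: D') ->
  par_in_form c Y = false /\ fresh_in c D'.
Proof. intros H Hp. apply fresh_cons. eapply fresh_perm; eauto. Qed.

Lemma ax_sub (X : fm) G G' D D' : is_axiom G D ->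
  (forall Y, In Y D -> Y = X \/ In Y D') -> X <> FTop -> X <> FBot -> ~ is_atomic X ->
  (forall Y, In Y G -> In Y G') -> is_axiom G' D'.
Proof.
  intros [H|[A [H1 [H2 H3]]]] HD H4 H5 H6 HG.
  - left. destruct (HD _ H) as [<-|]; auto. congruence.
  - right. exists A. split; auto. split; auto. destruct (HD _ H3) as [->|]; auto.
    destruct H1 as [->|]; congruence.
Qed.

Lemma in_perm_cons (X Y : fm) D D' : Permutation D (X :: D') -> In Y D -> Y = X \/ In Y D'.
Proof. intros Hp HY. pose proof (Permutation_in _ Hp HY) as H. destruct H; auto. Qed.


Lemma inv_and : forall n G D, K n G D -> forall A1 A2 Dl B,
  Permutation D (FAnd A1 A2 :: Dl) -> (B = A1 \/ B = A2) -> K n G (B :: Dl).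
Proof.
  induction 1; intros A1' A2' Dl B Hp HB.
  - apply kpL with G; auto. apply IHK with A1' A2'; auto. eapply Permutation_trans; eauto.
  - apply k_ax. refine (@ax_sub (FAnd A1' A2') _ _ _ _ H _ _ _ _ _);
      [intros Y HY; destruct (in_perm_cons _ Hp HY); auto; right; right; auto
      |discriminate|discriminate|simpl; auto|auto].
  - apply k_contrL; eauto.
  - destruct (perm_split Hp) as [[-> Hp']|[D' [H1 H2]]].
    + apply kpR with (B::D); [apply perm_skip; auto|]. apply k_botR; auto.
    + apply kpR with (A::B::D'); [apply P2; auto|]. apply k_botR.
      apply kpR with (B::FBot::D'); [apply perm_swap|]. apply IHK with A1' A2'; auto. apply P1; auto.
  - apply k_andL1; eauto.
  - apply k_andL2; eauto.
  - apply k_orL; eauto.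
  - destruct (perm_split Hp) as [[Heq Hp']|[D' [H1 H2]]].
    + injection Heq as -> ->. apply K_lift.
      destruct HB as [->| ->]; [apply kpR with (A1'::D)|apply kpR with (A2'::D)]; auto; apply perm_skip; auto.
    + apply kpR with (FAnd A1 A2::B::D'); [apply P2; auto|]. apply k_andR.
      * apply kpR with (B::A1::D'); [apply perm_swap|]. apply IHK1 with A1' A2'; auto. apply P1; auto.
      * apply kpR with (B::A2::D'); [apply perm_swap|]. apply IHK2 with A1' A2'; auto. apply P1; auto.
  - destruct (perm_split Hp) as [[Heq Hp']|[D' [H1 H2]]]; [discriminate|].
    apply kpR with (FImp A1 A2::B::D'); [apply P2; auto|]. apply k_impR.
    apply kpR with (B::A2::D'); [apply perm_swap|]. apply IHK with A1' A2'; auto. apply P1; auto.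
  - eapply k_allL; eauto.
  - apply k_exL with c; eauto.
    destruct (fresh_split H0 Hp) as [Hc1 Hc2]. apply fresh_cons; split; auto.
    simpl in Hc1. apply orb_false_elim in Hc1 as [Hc1 Hc3]. destruct HB; subst; auto.
  - destruct (perm_split Hp) as [[Heq Hp']|[D' [H2 H3]]]; [discriminate|].
    apply kpR with (FAll A::B::D'); [apply P2; auto|].
    apply fresh_cons in H0 as [Hc0 H0]. destruct (fresh_split H0 H3) as [Hc1 Hc2].
    apply k_allR with c; auto.
    + apply fresh_cons; split; auto. apply fresh_cons; split; auto.
      simpl in Hc1. apply orb_false_elim in Hc1 as [Hc1 Hc3]. destruct HB; subst; auto.
    + apply kpR with (B::inst A (Par c)::D'); [apply perm_swap|]. apply IHK with A1' A2'; auto. apply P1; auto.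
Qed.


Ltac fdes := repeat match goal with
 | H : fresh_in _ (_ :: _) |- _ => apply fresh_cons in H as [? ?]
 | H : fresh_in _ (_ ++ _) |- _ => apply fresh_app in H as [? ?]
 | H : par_in_form _ (FAnd _ _) = false |- _ => simpl in H; apply orb_false_elim in H as [? ?]
 | H : par_in_form _ (FOr _ _) = false |- _ => simpl in H; apply orb_false_elim in H as [? ?]
 | H : par_in_form _ (FImp _ _) = false |- _ => simpl in H; apply orb_false_elim in H as [? ?]
 | H : par_in_form _ (FAll _) = false |- _ => simpl in H
 | H : par_in_form _ (FEx _) = false |- _ => simpl in H
 end.

Ltac fcon := repeat match goal with
 | |- fresh_in _ (_ :: _) => apply fresh_cons; split
 | |- fresh_in _ (_ ++ _) => apply fresh_app; split
 | |- par_in_form _ (FAnd _ _) = false => simpl; apply orb_false_intro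
 | |- par_in_form _ (FOr _ _) = false => simpl; apply orb_false_intro
 | |- par_in_form _ (FImp _ _) = false => simpl; apply orb_false_intro
 | |- par_in_form _ (FAll _) = false => simpl
 | |- par_in_form _ (FEx _) = false => simpl
 end; auto.

Lemma ax_wk (W : fm) G D : is_axiom G D -> is_axiom (W :: G) D.
Proof. intros [H|[A [H1 [H2 H3]]]]; [left; auto|right; exists A; simpl; auto]. Qed.

Lemma wk : forall n G D, K n G D -> forall W, K n (W :: G) D.
Proof.
  intro n. induction n as [n IHn] using lt_wf_ind. intros G D H. revert IHn.
  induction H; intros IHn W; try (assert (IH := IHn _ (Nat.lt_succ_diag_r _)); clear IHn).
  - eapply k_perm; [apply perm_skip; eauto|eauto|]. apply IHK; auto.
  - apply k_ax, ax_wk; auto.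
  - apply kpL with (A :: W :: G); [apply perm_swap|]. apply k_contrL.
    apply kpL with (W :: A :: A :: G); [|apply IH; auto].
    eapply Permutation_trans; [apply perm_swap|]. apply perm_skip, perm_swap.
  - apply k_botR; auto.
  - apply kpL with (FAnd A1 A2 :: W :: G); [apply perm_swap|]. apply k_andL1.
    apply kpL with (W :: A1 :: G); [apply perm_swap|]. auto.
  - apply kpL with (FAnd A1 A2 :: W :: G); [apply perm_swap|]. apply k_andL2.
    apply kpL with (W :: A2 :: G); [apply perm_swap|]. auto.
  - apply kpL with (FOr A1 A2 :: W :: G); [apply perm_swap|]. apply k_orL.
    apply kpL with (W :: A1 :: G); [apply perm_swap|]. auto.
    apply kpL with (W :: A2 :: G); [apply perm_swap|]. auto.
  - apply k_andR; auto.
  - apply k_impR. apply kpL with (W :: A1 :: G); [apply perm_swap|]. auto.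
  - apply kpL with (FAll A :: W :: G); [apply perm_swap|]. apply k_allL with t.
    apply kpL with (W :: inst A t :: G); [apply perm_swap|]. auto.
  - destruct (fresh_exists (FEx A :: W :: G ++ D) 0 0) as [e [He _]].
    pose proof H as H'. pose proof H0 as H0'. fdes.
    apply (eig_swap A e) in H1; auto.
    apply kpL with (FEx A :: W :: G); [apply perm_swap|]. apply k_exL with e; [fcon|auto|].
    apply kpL with (W :: inst A (Par e) :: G); [apply perm_swap|]. auto.
  - destruct (fresh_exists (FAll A :: W :: G ++ D) 0 0) as [e [He _]].
    pose proof H as H'. pose proof H0 as H0'. fdes.
    apply (eig_swap_r A e) in H1; auto.
    apply k_allR with e; [fcon|fcon|]. auto.
Qed.


Lemma inv_imp : forall n G D, K n G D -> forall A1 A2 Dl,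
  Permutation D (FImp A1 A2 :: Dl) -> K n (A1 :: G) (A2 :: Dl).
Proof.
  intro n. induction n as [n IHn] using lt_wf_ind. intros G D H. revert IHn.
  induction H; intros IHn A1' A2' Dl Hp; try (assert (IH := IHn _ (Nat.lt_succ_diag_r _)); clear IHn).
  - apply kpL with (A1' :: G); [apply perm_skip; auto|]. apply IHK; auto.
    eapply Permutation_trans; eauto.
  - apply k_ax. refine (@ax_sub (FImp A1' A2') _ _ _ _ H _ _ _ _ _);
      [intros Y HY; destruct (in_perm_cons _ Hp HY); auto; right; right; auto
      |discriminate|discriminate|simpl; auto|intros; right; auto].
  - apply kpL with (A :: A1' :: G); [apply perm_swap|]. apply k_contrL.
    apply kpL with (A1' :: A :: A :: G); [|apply IH with D; auto].
    eapply Permutation_trans; [apply perm_swap|]. apply perm_skip, perm_swap.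
  - destruct (perm_split Hp) as [[-> Hp']|[D' [H1 H2]]].
    + apply kpR with (A2'::D); [apply perm_skip; auto|]. apply k_botR. apply wk; auto.
    + apply kpR with (A::A2'::D'); [apply P2; auto|]. apply k_botR.
      apply kpR with (A2'::FBot::D'); [apply perm_swap|]. apply IH with (FBot :: D); auto. apply P1; auto.
  - apply kpL with (FAnd A1 A2 :: A1' :: G); [apply perm_swap|]. apply k_andL1.
    apply kpL with (A1' :: A1 :: G); [apply perm_swap|]. apply IH with D; auto.
  - apply kpL with (FAnd A1 A2 :: A1' :: G); [apply perm_swap|]. apply k_andL2.
    apply kpL with (A1' :: A2 :: G); [apply perm_swap|]. apply IH with D; auto.
  - apply kpL with (FOr A1 A2 :: A1' :: G); [apply perm_swap|]. apply k_orL.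
    apply kpL with (A1' :: A1 :: G); [apply perm_swap|]. apply IH with D; auto.
    apply kpL with (A1' :: A2 :: G); [apply perm_swap|]. apply IH with D; auto.
  - destruct (perm_split Hp) as [[Heq Hp']|[D' [H1 H2]]]; [discriminate|].
    apply kpR with (FAnd A1 A2::A2'::D'); [apply P2; auto|]. apply k_andR.
    + apply kpR with (A2'::A1::D'); [apply perm_swap|]. apply IH with (A1 :: D); auto. apply P1; auto.
    + apply kpR with (A2'::A2::D'); [apply perm_swap|]. apply IH with (A2 :: D); auto. apply P1; auto.
  - destruct (perm_split Hp) as [[Heq Hp']|[D' [H1 H2]]].
    + injection Heq as -> ->. apply K_lift. apply kpR with (A2' :: D); [apply perm_skip; auto|auto].
    + apply kpR with (FImp A1 A2::A2'::D'); [apply P2; auto|]. apply k_impR.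
      apply kpR with (A2'::A2::D'); [apply perm_swap|].
      apply kpL with (A1'::A1::G); [apply perm_swap|].
      apply IH with (A2 :: D); auto. apply P1; auto.
  - apply kpL with (FAll A :: A1' :: G); [apply perm_swap|]. apply k_allL with t.
    apply kpL with (A1' :: inst A t :: G); [apply perm_swap|]. apply IH with D; auto.
  - destruct (fresh_exists (FEx A :: A1' :: G ++ D) 0 0) as [e [He _]].
    pose proof (fresh_split H0 Hp) as [Hc1 Hc2].
    assert (HeD : fresh_in e D) by (intros Z HZ; apply He; simpl; right; right; apply in_or_app; right; auto).
    pose proof (fresh_split HeD Hp) as [He1 He2]. fdes.
    apply (eig_swap A e) in H1; auto.
    apply kpL with (FEx A :: A1' :: G); [apply perm_swap|]. apply k_exL with e; [fcon|fcon|].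
    apply kpL with (A1' :: inst A (Par e) :: G); [apply perm_swap|]. apply IH with D; auto.
  - destruct (perm_split Hp) as [[Heq Hp']|[D' [H2 H3]]]; [discriminate|].
    destruct (fresh_exists (FAll A :: A1' :: G ++ D) 0 0) as [e [He _]].
    assert (HeD : fresh_in e D) by (intros Z HZ; apply He; simpl; right; right; apply in_or_app; right; auto).
    pose proof (fresh_split HeD H3) as [He1 He2].
    pose proof (fresh_split (proj2 (proj1 (fresh_cons _ _ _) H0)) H3) as [Hc1 Hc2]. fdes.
    apply (eig_swap_r A e) in H1; auto.
    apply kpR with (FAll A::A2'::D'); [apply P2; auto|].
    apply k_allR with e; [fcon|fcon|].
    apply kpR with (A2'::inst A (Par e)::D'); [apply perm_swap|].
    apply IH with (inst A (Par e) :: D); auto. apply P1; auto.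
Qed.


Lemma inv_all : forall n G D, K n G D -> forall A Dl c,
  Permutation D (FAll A :: Dl) -> K n G (inst A (Par c) :: Dl).
Proof.
  intro n. induction n as [n IHn] using lt_wf_ind. intros G D H. revert IHn.
  induction H; intros IHn A' Dl c' Hp; try (assert (IH := IHn _ (Nat.lt_succ_diag_r _)); clear IHn).
  - apply kpL with G; auto. apply IHK; auto. eapply Permutation_trans; eauto.
  - apply k_ax. refine (@ax_sub (FAll A') _ _ _ _ H _ _ _ _ _);
      [intros Y HY; destruct (in_perm_cons _ Hp HY); auto; right; right; auto
      |discriminate|discriminate|simpl; auto|auto].
  - apply k_contrL. apply IH with D; auto.
  - destruct (perm_split Hp) as [[-> Hp']|[D' [H1 H2]]].
    + apply kpR with (inst A' (Par c')::D); [apply perm_skip; auto|]. apply k_botR; auto.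
    + apply kpR with (A::inst A' (Par c')::D'); [apply P2; auto|]. apply k_botR.
      apply kpR with (inst A' (Par c')::FBot::D'); [apply perm_swap|]. apply IH with (FBot :: D); auto. apply P1; auto.
  - apply k_andL1. apply IH with D; auto.
  - apply k_andL2. apply IH with D; auto.
  - apply k_orL; apply IH with D; auto.
  - destruct (perm_split Hp) as [[Heq Hp']|[D' [H1 H2]]]; [discriminate|].
    apply kpR with (FAnd A1 A2::inst A' (Par c')::D'); [apply P2; auto|]. apply k_andR.
    + apply kpR with (inst A' (Par c')::A1::D'); [apply perm_swap|]. apply IH with (A1 :: D); auto. apply P1; auto.
    + apply kpR with (inst A' (Par c')::A2::D'); [apply perm_swap|]. apply IH with (A2 :: D); auto. apply P1; auto.
  - destruct (perm_split Hp) as [[Heq Hp']|[D' [H1 H2]]]; [discriminate|].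
    apply kpR with (FImp A1 A2::inst A' (Par c')::D'); [apply P2; auto|]. apply k_impR.
    apply kpR with (inst A' (Par c')::A2::D'); [apply perm_swap|].
    apply IH with (A2 :: D); auto. apply P1; auto.
  - apply k_allL with t. apply IH with D; auto.
  - destruct (fresh_exists (FEx A :: G ++ D) c' 0) as [e [He [Hec _]]].
    assert (HeD : fresh_in e D) by (intros Z HZ; apply He; simpl; right; apply in_or_app; right; auto).
    pose proof (fresh_split HeD Hp) as [He1 He2].
    fdes.
    apply (eig_swap A e) in H1; auto.
    apply k_exL with e; [fcon|fcon|].
    + apply par_inst; auto.
    + apply IH with D; auto.
  - destruct (perm_split Hp) as [[Heq Hp']|[D' [H2 H3]]].
    + injection Heq as ->. apply K_lift. fdes.
      apply ren_K with (c := c) (d := c') in H1.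
      assert (E1 : map (ren_form c c') G = G) by (apply ren_list_id; auto).
      rewrite ren_eig in H1 by auto. rewrite E1 in H1.
      eapply kpR; [|exact H1]. apply perm_skip; auto.
    + destruct (fresh_exists (FAll A :: FAll A' :: G ++ D) c' 0) as [e [He [Hec _]]].
      assert (HeD : fresh_in e D) by (intros Z HZ; apply He; simpl; right; right; apply in_or_app; right; auto).
      pose proof (fresh_split HeD H3) as [He1 He2].
      fdes.
      apply (eig_swap_r A e) in H1; auto.
      apply kpR with (FAll A::inst A' (Par c')::D'); [apply P2; auto|].
      apply k_allR with e; [fcon|fcon|].
      * apply par_inst; auto.
      * apply kpR with (inst A' (Par c')::inst A (Par e)::D'); [apply perm_swap|].
        apply IH with (inst A (Par e) :: D); auto. apply P1; auto.
Qed.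


Lemma nonempty_perm (l l' : list fm) : Permutation l l' -> l' <> [] -> l <> [].
Proof. intros H H1 ->. apply Permutation_nil in H. auto. Qed.

Lemma bot_remove : forall n G D, K n G D -> forall Dl,
  Permutation D (FBot :: Dl) -> Dl <> [] -> exists m, K m G Dl.
Proof.
  induction 1; intros Dl Hp Hne.
  - destruct (IHK Dl) as [m Hm]; auto. eapply Permutation_trans; eauto. exists m. apply kpL with G; auto.
  - destruct H as [H|[A [H1 [H2 H3]]]].
    + exists 0. apply k_ax. left. destruct (in_perm_cons _ Hp H); [discriminate|auto].
    + destruct (in_perm_cons _ Hp H3) as [->|H4].
      * destruct Dl as [|Y Dl1]; [congruence|]. exists 1. apply k_botR. apply k_ax.
        right. exists FBot. split; auto. split; auto. left; auto.
      * exists 0. apply k_ax. right. exists A. auto.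
  - destruct (IHK Dl) as [m Hm]; auto. exists (S m). apply k_contrL; auto.
  - destruct (perm_split Hp) as [[-> Hp']|[D' [H1 H2]]].
    + destruct (IHK D) as [m Hm]; [auto|eapply nonempty_perm; eauto|].
      exists m. eapply kpR; eauto.
    + destruct (IHK (FBot :: D')) as [m Hm]; [apply perm_skip; auto|discriminate|].
      exists (S m). apply kpR with (A :: D'); [apply Permutation_sym; auto|]. apply k_botR; auto.
  - destruct (IHK Dl) as [m Hm]; auto. exists (S m). apply k_andL1; auto.
  - destruct (IHK Dl) as [m Hm]; auto. exists (S m). apply k_andL2; auto.
  - destruct (IHK1 Dl) as [m1 Hm1]; auto. destruct (IHK2 Dl) as [m2 Hm2]; auto.
    exists (S (Nat.max m1 m2)). apply k_orL; [apply K_mono with (n:=m1)|apply K_mono with (n:=m2)]; auto; lia.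
  - destruct (perm_split Hp) as [[Heq Hp']|[D' [H1 H2]]]; [discriminate|].
    destruct (IHK1 (A1 :: D')) as [m1 Hm1]; [apply P1; auto|discriminate|].
    destruct (IHK2 (A2 :: D')) as [m2 Hm2]; [apply P1; auto|discriminate|].
    exists (S (Nat.max m1 m2)). apply kpR with (FAnd A1 A2 :: D'); [apply Permutation_sym; auto|].
    apply k_andR; [apply K_mono with (n:=m1)|apply K_mono with (n:=m2)]; auto; lia.
  - destruct (perm_split Hp) as [[Heq Hp']|[D' [H1 H2]]]; [discriminate|].
    destruct (IHK (A2 :: D')) as [m1 Hm1]; [apply P1; auto|discriminate|].
    exists (S m1). apply kpR with (FImp A1 A2 :: D'); [apply Permutation_sym; auto|].
    apply k_impR; auto.
  - destruct (IHK Dl) as [m Hm]; auto. exists (S m). eapply k_allL; eauto.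
  - destruct (IHK Dl) as [m Hm]; auto. exists (S m). eapply k_exL; eauto.
    destruct (fresh_split H0 Hp); auto.
  - destruct (perm_split Hp) as [[Heq Hp']|[D' [H2 H3]]]; [discriminate|].
    destruct (IHK (inst A (Par c) :: D')) as [m1 Hm1]; [apply P1; auto|discriminate|].
    exists (S m1). apply kpR with (FAll A :: D'); [apply Permutation_sym; auto|].
    apply fresh_cons in H0 as [Hc1 Hc2]. destruct (fresh_split Hc2 H3).
    apply k_allR with c; auto. fcon.
Qed.


Lemma ax_mono G (D D' : list fm) : is_axiom G D -> (forall Y, In Y D -> In Y D') -> is_axiom G D'.
Proof. intros [H|[A [H1 [H2 H3]]]] HD; [left; auto|right; exists A; auto]. Qed.

Lemma P3 (X A : fm) D0 D' : Permutation D0 (A :: A :: D') -> Permutation (X :: D0) (A :: A :: X :: D').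
Proof. intros H. eapply Permutation_trans; [apply perm_skip; eauto|].
  eapply Permutation_trans; [apply perm_swap|]. apply perm_skip, perm_swap. Qed.

Lemma contr : forall n G D, K n G D -> forall A Dl,
  Permutation D (A :: A :: Dl) -> exists m, K m G (A :: Dl).
Proof.
  intro n. induction n as [n IHn] using lt_wf_ind. intros G D H. revert IHn.
  induction H; intros IHn A' Dl Hp; try (assert (IH := IHn _ (Nat.lt_succ_diag_r _)); clear IHn).
  - destruct (IHK IHn A' Dl) as [m Hm]. eapply Permutation_trans; eauto.
    exists m. apply kpL with G; auto.
  - exists 0. apply k_ax. apply ax_mono with D; auto. intros Y HY.
    eapply Permutation_in in HY; [|exact Hp]. destruct HY as [->|HY]; simpl; auto.
  - destruct (IH _ _ H A' Dl Hp) as [m Hm]. exists (S m). apply k_contrL; auto.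
  - destruct (perm_split2 Hp) as [[-> Hp']|[D' [H1 H2]]].
    + apply (bot_remove H). apply perm_skip; auto. discriminate.
    + destruct (IH _ _ H A' (FBot :: D')) as [m Hm]. apply P3; auto.
      exists (S m). apply kpR with (A :: A' :: D'); [apply P2; auto|]. apply k_botR.
      apply kpR with (A' :: FBot :: D'); [apply perm_swap|auto].
  - destruct (IH _ _ H A' Dl Hp) as [m Hm]. exists (S m). apply k_andL1; auto.
  - destruct (IH _ _ H A' Dl Hp) as [m Hm]. exists (S m). apply k_andL2; auto.
  - destruct (IH _ _ H A' Dl Hp) as [m1 Hm1]. destruct (IH _ _ H0 A' Dl Hp) as [m2 Hm2].
    exists (S (Nat.max m1 m2)). apply k_orL; [apply K_mono with (n:=m1)|apply K_mono with (n:=m2)]; auto; lia.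
  - destruct (perm_split2 Hp) as [[Heq Hp']|[D' [H1 H2]]].
    + subst A'.
      assert (Ha1 := inv_and H (A1 := A1) (A2 := A2) (Dl := A1 :: Dl) (B := A1)).
      assert (Ha2 := inv_and H0 (A1 := A1) (A2 := A2) (Dl := A2 :: Dl) (B := A2)).
      destruct (IH _ _ (Ha1 (P1 _ Hp') (or_introl eq_refl)) A1 Dl) as [m1 Hm1]; auto.
      destruct (IH _ _ (Ha2 (P1 _ Hp') (or_intror eq_refl)) A2 Dl) as [m2 Hm2]; auto.
      exists (S (Nat.max m1 m2)). apply k_andR; [apply K_mono with (n:=m1)|apply K_mono with (n:=m2)]; auto; lia.
    + destruct (IH _ _ H A' (A1 :: D')) as [m1 Hm1]. apply P3; auto.
      destruct (IH _ _ H0 A' (A2 :: D')) as [m2 Hm2]. apply P3; auto.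
      exists (S (Nat.max m1 m2)). apply kpR with (FAnd A1 A2 :: A' :: D'); [apply P2; auto|].
      apply k_andR; [apply K_mono with (n:=m1)|apply K_mono with (n:=m2)]; try lia.
      * apply kpR with (A' :: A1 :: D'); [apply perm_swap|auto].
      * apply kpR with (A' :: A2 :: D'); [apply perm_swap|auto].
  - destruct (perm_split2 Hp) as [[Heq Hp']|[D' [H1 H2]]].
    + subst A'.
      assert (Hi := inv_imp H (A1 := A1) (A2 := A2) (Dl := A2 :: Dl) (P1 _ Hp')).
      destruct (IH _ _ Hi A2 Dl) as [m Hm]; auto.
      exists (S (S m)). apply k_impR. apply k_contrL. auto.
    + destruct (IH _ _ H A' (A2 :: D')) as [m1 Hm1]. apply P3; auto.
      exists (S m1). apply kpR with (FImp A1 A2 :: A' :: D'); [apply P2; auto|].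
      apply k_impR. apply kpR with (A' :: A2 :: D'); [apply perm_swap|auto].
  - destruct (IH _ _ H A' Dl Hp) as [m Hm]. exists (S m). eapply k_allL; eauto.
  - destruct (IH _ _ H1 A' Dl Hp) as [m Hm]. exists (S m). eapply k_exL; eauto.
    intros Z HZ. apply H0. eapply Permutation_in; [apply Permutation_sym; exact Hp|]. simpl in *; tauto.
  - destruct (perm_split2 Hp) as [[Heq Hp']|[D' [H2 H3]]].
    + subst A'.
      assert (Hi := inv_all H1 (A := A) (Dl := inst A (Par c) :: Dl) c (P1 _ Hp')).
      destruct (IH _ _ Hi (inst A (Par c)) Dl) as [m Hm]; auto.
      exists (S m). apply k_allR with c; auto.
      intros Z HZ. apply H0. destruct HZ as [<-|HZ]; [left; auto|right].
      eapply Permutation_in; [apply Permutation_sym; exact Hp'|]. right; auto.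
    + destruct (IH _ _ H1 A' (inst A (Par c) :: D')) as [m1 Hm1]. apply P3; auto.
      exists (S m1). apply kpR with (FAll A :: A' :: D'); [apply P2; auto|].
      apply k_allR with c; auto.
      * intros Z HZ. apply H0. destruct HZ as [<-|HZ]; [left; auto|right].
        eapply Permutation_in; [apply Permutation_sym; exact H3|]. simpl in *; tauto.
      * apply kpR with (A' :: inst A (Par c) :: D'); [apply perm_swap|auto].
Qed.


Definition allowedF (r : rule) : Prop := r <> RImpL /\ r <> ROrR /\ r <> RExR.

Lemma to_K : forall G D, deriv allowedF false G D -> exists n, K n G D.
Proof.
  induction 1.
  - destruct IHderiv as [n Hn]. exists n. eapply k_perm; eauto.
  - exists 0. apply k_ax; auto.
  - destruct IHderiv as [n Hn]. exists (S n). apply k_contrL; auto.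
  - destruct IHderiv as [n Hn]. destruct (contr Hn (A := A) (Dl := D)) as [m Hm].
    apply Permutation_app_comm.
    exists m. eapply kpR; [|exact Hm]. apply Permutation_cons_append.
  - destruct IHderiv as [n Hn]. exists (S n). eapply kpR; [apply Permutation_cons_append|].
    apply k_botR. eapply kpR; [apply Permutation_sym, Permutation_cons_append|exact Hn].
  - destruct IHderiv as [n Hn]. exists (S n). apply k_andL1; auto.
  - destruct IHderiv as [n Hn]. exists (S n). apply k_andL2; auto.
  - destruct IHderiv1 as [n1 Hn1]. destruct IHderiv2 as [n2 Hn2].
    exists (S (Nat.max n1 n2)). apply k_orL; [apply K_mono with (n:=n1)|apply K_mono with (n:=n2)]; auto; lia.
  - destruct IHderiv1 as [n1 Hn1]. destruct IHderiv2 as [n2 Hn2].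
    exists (S (Nat.max n1 n2)). eapply kpR; [apply Permutation_cons_append|].
    apply k_andR; [apply K_mono with (n:=n1)|apply K_mono with (n:=n2)]; try lia;
    (eapply kpR; [apply Permutation_sym, Permutation_cons_append|]); auto.
  - destruct H as [_ [H _]]. congruence.
  - destruct H as [_ [H _]]. congruence.
  - destruct H as [H _]. congruence.
  - destruct IHderiv as [n Hn]. exists (S n). eapply kpR; [apply Permutation_cons_append|].
    apply k_impR. eapply kpR; [apply Permutation_sym, Permutation_cons_append|exact Hn].
  - destruct IHderiv as [n Hn]. exists (S n). eapply k_allL; eauto.
  - destruct H as [_ [_ H]]. congruence.
  - destruct IHderiv as [n Hn]. exists (S n). eapply k_exL; eauto; apply pl_iff; auto.
  - destruct IHderiv as [n Hn]. exists (S n). eapply kpR; [apply Permutation_cons_append|].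
    apply k_allR with c.
    + apply pl_iff; auto.
    + eapply fresh_perm; [apply Permutation_sym, Permutation_cons_append|]. apply pl_iff; auto.
    + eapply kpR; [apply Permutation_sym, Permutation_cons_append|exact Hn].
Qed.

Lemma K_to_I : forall n G D, K n G D -> length D = 1 -> I_provable G D.
Proof.
  unfold I_provable. induction 1; intros Hl.
  - eapply d_perm; eauto. apply IHK. rewrite (Permutation_length H0); auto.
  - apply d_ax; auto.
  - apply d_contrL; auto.
  - destruct D; [|simpl in Hl; discriminate].
    change [A] with ([] ++ [A]). apply d_botR; auto.
  - apply d_andL1; auto.
  - apply d_andL2; auto.
  - apply d_orL; auto.
  - destruct D; [|simpl in Hl; discriminate].
    change [FAnd A1 A2] with ([] ++ [FAnd A1 A2]). apply d_andR; auto.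
  - destruct D; [|simpl in Hl; discriminate].
    change [FImp A1 A2] with ([] ++ [FImp A1 A2]). apply d_impR; auto.
  - eapply d_allL; eauto.
  - eapply d_exL; eauto; apply pl_iff; auto.
  - destruct D; [|simpl in Hl; discriminate].
    change [FAll A] with ([] ++ [FAll A]). apply d_allR with c; auto; apply pl_iff; auto.
Qed.

End S.

Theorem theorem6 (F P : Type) (G : list (formula F P)) (B : formula F P) :
  deriv (fun r => r <> RImpL /\ r <> ROrR /\ r <> RExR) false G [B] ->
  I_provable G [B].
Proof.
  intros H. destruct (to_K H) as [n Hn]. eapply K_to_I; eauto.
Qed.
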